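(* Let $N,M,n$ be integers with $1\le M\le N$ and $1\le n\le N$, and let $X\sim\mathrm{HypGeo}(N;M,n)$. Then $$E\Big(\Big|\log\frac{X}{EX}\Big|\,\mathbb{1}_{\{X>0\}}\Big)\le \frac{4N\log N}{nM}+2\sqrt{\frac{N}{nM}} .$$
   Context: $X\sim\mathrm{HypGeo}(N;M,n)$ means $P(X=k)=\binom{M}{k}\binom{N-M}{n-k}/\binom{N}{n}$ for $k=0,\dots,n$. $\log$ is the natural logarithm and $\mathbb{1}_A$ is the indicator of the event $A$. *)

(* Defs.v *)
From Stdlib Require Import Reals Lra Lia.
Open Scope R_scope.

Fixpoint binom (n k : nat) : nat :=
  match n, k with
  | _, O => 1%nat
  | O, S _ => 0%nat
  | S n', S k' => (binom n' k' + binom n' (S k'))%nat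
  end.

Definition hyp_pmf (N M n k : nat) : R :=
  INR (binom M k * binom (N - M) (n - k)) / INR (binom N n).

Definition hyp_E (N M n : nat) (g : nat -> R) : R :=
  sum_f_R0 (fun k => hyp_pmf N M n k * g k) n.

Definition hyp_mean (N M n : nat) : R := hyp_E N M n INR.

(* Main.v *)
Require Import Defs.
From Stdlib Require Import Reals Lra Lia.
Open Scope R_scope.

Lemma ln_le' x y : 0 < x -> x <= y -> ln x <= ln y.
Proof.
intros hx hxy; destruct (Rle_lt_or_eq_dec _ _ hxy) as [h|h].
- left; now apply ln_increasing.
- subst; lra.
Qed.

Lemma ln_le_sub1 t : 0 < t -> ln t <= t - 1.
Proof. intros ht; pose proof (exp_ineq1_le (ln t)); rewrite exp_ln in H; lra. Qed.

Lemma step1 x mu Nr : 1 <= x -> 0 < mu -> mu <= Nr -> 1 <= Nr ->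
  Rabs (ln (x / mu)) <= 2 * Rabs (x - mu) / mu + ln Nr * (4 * (x - mu)^2 / mu^2).
Proof.
intros hx hmu hN hN1.
assert (hlnN : 0 <= ln Nr) by (rewrite <- ln_1; apply ln_le'; lra).
assert (hq : 0 <= 4 * (x - mu)^2 / mu^2).
{ apply Rmult_le_pos; [apply Rmult_le_pos; [lra| apply pow2_ge_0]| left; apply Rinv_0_lt_compat; apply pow_lt; lra]. }
assert (hsplit : ln (x / mu) = - ln (mu / x)).
{ assert (h := ln_mult (x/mu) (mu/x)).
  replace (x / mu * (mu / x)) with 1 in h by (field; lra).
  rewrite ln_1 in h.
  assert (0 < x / mu) by (apply Rdiv_lt_0_compat; lra).
  assert (0 < mu / x) by (apply Rdiv_lt_0_compat; lra). lra. }
destruct (Rle_or_lt mu x) as [h1|h1].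
- assert (0 <= ln (x / mu)).
  { rewrite <- ln_1; apply ln_le'; [lra|]. apply (Rmult_le_reg_r mu); [lra|].
    unfold Rdiv; rewrite Rmult_assoc, Rinv_l; lra. }
  rewrite (Rabs_right (ln _)) by lra.
  rewrite (Rabs_right (x - mu)) by lra.
  assert (ln (x / mu) <= x / mu - 1) by (apply ln_le_sub1; apply Rdiv_lt_0_compat; lra).
  assert (x / mu - 1 <= 2 * (x - mu) / mu).
  { apply (Rmult_le_reg_r mu); [lra|]. unfold Rdiv.
    replace ((x * / mu - 1) * mu) with (x - mu) by (field; lra).
    replace (2 * (x - mu) * / mu * mu) with (2 * (x - mu)) by (field; lra). lra. }
  nra.
- assert (0 <= ln (mu / x)).
  { rewrite <- ln_1; apply ln_le'; [lra|]. apply (Rmult_le_reg_r x); [lra|].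
    unfold Rdiv; rewrite Rmult_assoc, Rinv_l; lra. }
  rewrite hsplit, Rabs_Ropp, (Rabs_right (ln _)) by lra.
  rewrite (Rabs_left (x - mu)) by lra.
  destruct (Rle_or_lt mu (2 * x)) as [h2|h2].
  + assert (ln (mu / x) <= mu / x - 1) by (apply ln_le_sub1; apply Rdiv_lt_0_compat; lra).
    assert (mu / x - 1 <= 2 * - (x - mu) / mu).
    { apply (Rmult_le_reg_r (mu * x)); [nra|]. unfold Rdiv.
      replace ((mu * / x - 1) * (mu * x)) with (mu * (mu - x)) by (field; lra).
      replace (2 * - (x - mu) * / mu * (mu * x)) with (2 * x * (mu - x)) by (field; lra). nra. }
    nra.
  + assert (ln (mu / x) <= ln Nr).
    { apply ln_le'. apply Rdiv_lt_0_compat; lra.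
      apply (Rmult_le_reg_r x); [lra|]. unfold Rdiv; rewrite Rmult_assoc, Rinv_l; nra. }
    assert (1 <= 4 * (x - mu)^2 / mu^2).
    { apply (Rmult_le_reg_r (mu^2)); [nra|]. unfold Rdiv.
      rewrite Rmult_assoc, Rinv_l by nra. nra. }
    assert (0 <= 2 * - (x - mu) / mu).
    { apply Rmult_le_pos; [lra| left; apply Rinv_0_lt_compat; lra]. }
    nra.
Qed.

Lemma pw (k : nat) mu Nr : 0 < mu -> mu <= Nr -> 1 <= Nr ->
  (if (0 <? k)%nat then Rabs (ln (INR k / mu)) else 0)
  <= (/ (mu * sqrt mu) + 4 * ln Nr / mu^2) * (INR k - mu)^2 + sqrt mu / mu.
Proof.
intros hmu hmuN hN.
assert (hlnN : 0 <= ln Nr) by (rewrite <- ln_1; apply ln_le'; lra).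
pose proof (sqrt_lt_R0 mu hmu) as hs.
pose proof (sqrt_sqrt mu (Rlt_le _ _ hmu)) as hss.
set (s := sqrt mu) in *.
assert (hB : 0 <= s / mu) by (apply Rmult_le_pos; [lra| left; apply Rinv_0_lt_compat; lra]).
assert (hA1 : 0 <= / (mu * s)) by (left; apply Rinv_0_lt_compat; nra).
assert (hA2 : 0 <= 4 * ln Nr / mu^2).
{ apply Rmult_le_pos; [lra| left; apply Rinv_0_lt_compat; apply pow_lt; lra]. }
destruct (Nat.ltb_spec 0 k) as [hk|hk].
2:{ assert (0 <= (/ (mu * s) + 4 * ln Nr / mu ^ 2) * (INR k - mu) ^ 2) by
      (apply Rmult_le_pos; [lra| apply pow2_ge_0]). lra. }
assert (hx : 1 <= INR k) by (apply (le_INR 1); lia).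
pose proof (step1 (INR k) mu Nr hx hmu hmuN hN) as h1.
set (d := INR k - mu) in *.
assert (h2 : 2 * Rabs d / mu <= / (mu * s) * d^2 + s / mu).
{ assert (Rabs d <= d^2 / (2 * s) + s / 2).
  { apply (Rmult_le_reg_r (2 * s)); [lra|].
    replace ((d ^ 2 / (2 * s) + s / 2) * (2 * s)) with (d^2 + s * s) by (field; lra).
    assert (0 <= (Rabs d - s)^2) by apply pow2_ge_0.
    destruct (Rcase_abs d) as [hd|hd];
      [rewrite (Rabs_left d hd) in *|rewrite (Rabs_right d hd) in *]; nra. }
  replace (/ (mu * s) * d ^ 2 + s / mu) with (2 * (d ^ 2 / (2 * s) + s / 2) / mu)
    by (field; lra).
  unfold Rdiv. apply Rmult_le_compat_r; [left; apply Rinv_0_lt_compat; lra| lra]. }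
replace (ln Nr * (4 * d ^ 2 / mu ^ 2)) with (4 * ln Nr / mu ^ 2 * d^2) in h1
  by (field; lra).
lra.
Qed.
Lemma sum_scal_l (f : nat -> R) c n :
  sum_f_R0 (fun i => c * f i) n = c * sum_f_R0 f n.
Proof. rewrite scal_sum; apply sum_eq; intros; ring. Qed.

Lemma INR_kk1 k : INR (k * Nat.pred k) = INR k * (INR k - 1).
Proof.
destruct k as [|k]; simpl Nat.pred. simpl; ring.
rewrite mult_INR, S_INR; ring.
Qed.

Lemma assemble (P g : nat -> R) n mu A B :
  (forall k, 0 <= P k) ->
  sum_f_R0 P n = 1 ->
  sum_f_R0 (fun k => P k * INR k) n = mu ->
  sum_f_R0 (fun k => P k * INR (k * Nat.pred k)) n <= mu ^ 2 ->
  0 <= A ->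
  (forall k, g k <= A * (INR k - mu)^2 + B) ->
  sum_f_R0 (fun k => P k * g k) n <= A * mu + B.
Proof.
intros hP h0 h1 h2 hA hg.
eapply Rle_trans.
{ apply sum_Rle; intros k _. apply Rmult_le_compat_l; [apply hP| apply (hg k)]. }
rewrite (sum_eq _ (fun k => A * (P k * INR (k * Nat.pred k)) + ((A * (1 - 2 * mu)) * (P k * INR k)
   + (A * mu^2 + B) * P k))).
2:{ intros i _; rewrite INR_kk1; ring. }
rewrite !plus_sum, !sum_scal_l, h0, h1.
nra.
Qed.

Set Warnings "-notation-overridden".
From mathcomp Require Import all_boot zify.
Open Scope R_scope.

Lemma binomE n k : binom n k = 'C(n, k).
Proof.
elim: n k => [|n IH] [|k] //=.
by rewrite binS IH IH addnC.
Qed.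

Lemma sumR_big (f : nat -> nat) n :
  sum_f_R0 (fun k => INR (f k)) n = INR (\sum_(k < n.+1) f k).
Proof.
elim: n => [|n IH]; first by rewrite big_ord_recr big_ord0 /=.
by rewrite /= IH [in RHS]big_ord_recr /= plus_INR.
Qed.

Lemma conv (c g : nat -> nat) n D :
  sum_f_R0 (fun k => INR (c k) / D * INR (g k)) n
  = INR (\sum_(k < n.+1) g k * c k)%nat / D.
Proof.
rewrite -(sumR_big (fun k => g k * c k)%nat) /Rdiv Rmult_comm scal_sum; symmetry.
apply PartSum.sum_eq; intros i _.
rewrite (mult_INR (g i) (c i)); ring.
Qed.

Lemma E_nat N M n (g : nat -> nat) :
  sum_f_R0 (fun k => hyp_pmf N M n k * INR (g k)) n
  = INR (\sum_(k < n.+1) g k * ('C(M, k) * 'C(N - M, n - k)))%nat / INR 'C(N, n).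
Proof.
rewrite /hyp_pmf.
rewrite (conv (fun k => (binom M k * binom (N - M) (n - k))%nat) g n (INR (binom N n))).
rewrite binomE; congr (INR _ / _).
by apply: eq_bigr => i _; rewrite !binomE.
Qed.

Lemma I1 M' L n' :
  (\sum_(k < n'.+2) k * ('C(M'.+1, k) * 'C(L, n'.+1 - k)) = M'.+1 * 'C(M' + L, n'))%nat.
Proof.
rewrite big_ord_recl /= mul0n add0n -Vandermonde big_distrr /=.
apply: eq_bigr => i _.
rewrite /bump /= add1n subSS mulnA -mul_bin_diag /= mulnA.
by [].
Qed.

Lemma I2 M' L n' :
  (\sum_(k < n'.+3) k * k.-1 * ('C(M'.+2, k) * 'C(L, n'.+2 - k))
     = M'.+2 * M'.+1 * 'C(M' + L, n'))%nat.
Proof.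
rewrite big_ord_recl big_ord_recl /= mul0n add0n muln0 mul0n add0n.
rewrite -Vandermonde big_distrr /=.
apply: eq_bigr => i _.
rewrite /bump /= !add1n !subSS.
have h1 : (i.+2 * 'C(M'.+2, i.+2) = M'.+2 * 'C(M'.+1, i.+1))%nat by rewrite -mul_bin_diag.
have h2 : (i.+1 * 'C(M'.+1, i.+1) = M'.+1 * 'C(M', i))%nat by rewrite -mul_bin_diag.
rewrite mulnA (mulnC i.+2) -(mulnA i.+1) h1 mulnCA h2.
by rewrite !mulnA.
Qed.

Lemma I2z M L n : (M <= 1 \/ n <= 1)%nat ->
  (\sum_(k < n.+1) k * k.-1 * ('C(M, k) * 'C(L, n - k)))%nat = 0%nat.
Proof.
move=> h; apply: big1 => [[k hk]] _ /=.
case: h => h.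
  case: k hk => [|[|k]] hk //=; by rewrite bin_small ?muln0 ?mul0n //; lia.
case: k hk => [|[|k]] hk //=; lia.
Qed.

Lemma binpos N n : (n <= N)%nat -> 0 < INR 'C(N, n).
Proof. move=> h; apply: (lt_0_INR); apply/ltP; by rewrite bin_gt0. Qed.

Lemma sum1 N M n : (M <= N)%nat -> (n <= N)%nat ->
  sum_f_R0 (fun k => hyp_pmf N M n k) n = 1.
Proof.
move=> hM hn.
have h := E_nat N M n (fun _ => 1%nat).
rewrite (PartSum.sum_eq _ (fun k => hyp_pmf N M n k * INR 1)); last by move=> i _ /=; ring.
rewrite h.
have -> : (\sum_(k < n.+1) 1 * ('C(M, k) * 'C(N - M, n - k)))%nat = 'C(N, n).
  under eq_bigr => i _ do rewrite mul1n.
  by rewrite Vandermonde subnKC.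
have hp := binpos N n hn; field; lra.
Qed.

Lemma hC M' L n' :
  INR (M'.+1 + L) * INR 'C(M' + L, n') = INR n'.+1 * INR 'C(M'.+1 + L, n'.+1).
Proof.
rewrite -!mult_INR; congr INR.
have := mul_bin_diag (M'.+1 + L) n'. by rewrite addSn /=.
Qed.

Lemma mean M' L n' : (n'.+1 <= M'.+1 + L)%nat ->
  hyp_mean (M'.+1 + L) M'.+1 n'.+1 = INR n'.+1 * INR M'.+1 / INR (M'.+1 + L).
Proof.
move=> hn.
rewrite /hyp_mean /hyp_E.
have h := E_nat (M'.+1 + L) M'.+1 n'.+1 (fun k => k); cbv beta in h; rewrite h.
rewrite addKn I1 mult_INR.
have hp := binpos (M'.+1 + L) n'.+1 hn.
have hc := hC M' L n'.
have hN : 0 < INR (M'.+1 + L) by apply: lt_0_INR; apply/ltP.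
apply: (Rmult_eq_reg_r (INR (M'.+1 + L) * INR 'C(M'.+1 + L, n'.+1))); last by nra.
field_simplify; try lra.
rewrite Rmult_assoc (Rmult_comm (INR 'C(M' + L, n'))) hc; ring.
Qed.

Lemma F2 M' L n' : (n'.+1 <= M'.+1 + L)%nat ->
  sum_f_R0 (fun k => hyp_pmf (M'.+1 + L) M'.+1 n'.+1 k * INR (k * Nat.pred k)) n'.+1
  <= (INR n'.+1 * INR M'.+1 / INR (M'.+1 + L)) ^ 2.
Proof.
move=> hn.
have h := E_nat (M'.+1 + L) M'.+1 n'.+1 (fun k => k * Nat.pred k)%nat; cbv beta in h; rewrite h addKn.
have hp := binpos (M'.+1 + L) n'.+1 hn.
have hN : 0 < INR (M'.+1 + L) by apply: lt_0_INR; apply/ltP.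
case: M' hn hp hN h => [|M''] hn hp hN h.
  rewrite I2z; last by left.
  rewrite /= /Rdiv Rmult_0_l; apply: pow2_ge_0.
case: n' hn hp hN h => [|n''] hn hp hN h.
  rewrite I2z; last by right.
  rewrite /= /Rdiv Rmult_0_l; apply: pow2_ge_0.
rewrite I2.
have e1 := hC M''.+1 L n''.+1.
have e2 := hC M'' L n''.
rewrite !mult_INR.
have ez : INR (M''.+2 + L) = INR (M''.+1 + L) + 1 by rewrite addSn S_INR.
have ex : INR M''.+2 = INR M''.+1 + 1 by rewrite S_INR.
have ey : INR n''.+2 = INR n''.+1 + 1 by rewrite S_INR.
have hx1 : 1 <= INR M''.+1 by apply: (le_INR 1); apply/leP.
have hy1 : 1 <= INR n''.+1 by apply: (le_INR 1); apply/leP.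
have hxz : INR M''.+1 <= INR (M''.+1 + L) by apply: le_INR; apply/leP; rewrite leq_addr.
have hyz : INR n''.+1 <= INR (M''.+1 + L) by apply: le_INR; apply/leP; lia.
move: e1 e2 hp hN h; rewrite ez ex ey.
set x := INR M''.+1 in hx1 hxz *; set y := INR n''.+1 in hy1 hyz *; set z := INR (M''.+1 + L) in hxz hyz *.
set Cn := INR 'C(_, n''.+2); set C1 := INR 'C(_, n''.+1); set C2 := INR 'C(_, n'').
move=> e1 e2 hp hN _.
have hz0 : z * (z + 1) <> 0 by apply: Rmult_integral_contrapositive_currified; lra.
have hC2 : C2 = y * (y + 1) * Cn / (z * (z + 1)).
  apply: (Rmult_eq_reg_r (z * (z + 1))); last by [].
  have -> : y * (y + 1) * Cn / (z * (z + 1)) * (z * (z + 1)) = y * (y + 1) * Cn by field; repeat split; lra.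
  have -> : C2 * (z * (z + 1)) = (z * C2) * (z + 1) by ring.
  rewrite e2.
  have -> : y * C1 * (z + 1) = y * ((z + 1) * C1) by ring.
  rewrite e1; ring.
rewrite hC2.
have -> : (x + 1) * x * (y * (y + 1) * Cn / (z * (z + 1))) / Cn
   = (x + 1) * x * y * (y + 1) / (z * (z + 1)) by field; lra.
apply: (Rmult_le_reg_r (z * z * (z + 1))); first by nra.
have -> : (x + 1) * x * y * (y + 1) / (z * (z + 1)) * (z * z * (z + 1))
   = (x + 1) * x * y * (y + 1) * z by field; lra.
have -> : ((y + 1) * (x + 1) / (z + 1)) ^ 2 * (z * z * (z + 1))
   = (y + 1) * (x + 1) * ((y + 1) * (x + 1)) * z * z / (z + 1) by field; lra.
apply: (Rmult_le_reg_r (z + 1)); first by lra.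
have -> : (y + 1) * (x + 1) * ((y + 1) * (x + 1)) * z * z / (z + 1) * (z + 1)
   = (y + 1) * (x + 1) * ((y + 1) * (x + 1)) * z * z by field; lra.
have hk : 0 <= (x + 1) * (y + 1) * z by apply: Rmult_le_pos; [apply: Rmult_le_pos|]; lra.
have hd : x * y * (z + 1) <= (x + 1) * (y + 1) * z by nra.
have -> : (x + 1) * x * y * (y + 1) * z * (z + 1) = ((x + 1) * (y + 1) * z) * (x * y * (z + 1)) by ring.
have -> : (y + 1) * (x + 1) * ((y + 1) * (x + 1)) * z * z = ((x + 1) * (y + 1) * z) * ((x + 1) * (y + 1) * z) by ring.
by apply: Rmult_le_compat_l.
Qed.

Theorem lemma5 (N M n : nat) (hM1 : Peano.le 1 M) (hMN : Peano.le M N)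
  (hn1 : Peano.le 1 n) (hnN : Peano.le n N) :
  hyp_E N M n (fun k => if (0 <? k)%nat
                        then Rabs (ln (INR k / hyp_mean N M n)) else 0)
  <= 4 * INR N * ln (INR N) / (INR n * INR M)
     + 2 * sqrt (INR N / (INR n * INR M)).
Proof.
case: M hM1 hMN => [|M'] hM1 hMN; first by lia.
case: n hn1 hnN => [|n'] hn1 hnN; first by lia.
have [L eN] : exists L, N = (M'.+1 + L)%nat by exists (N - M'.+1)%nat; lia.
subst N.
have hnle : (n'.+1 <= M'.+1 + L)%N by lia.
have hmu := mean M' L n' hnle.
rewrite hmu.
set m := INR n'.+1 * INR M'.+1 / INR (M'.+1 + L).
have hN : 0 < INR (M'.+1 + L) by apply: lt_0_INR; apply/ltP.
have hN1 : 1 <= INR (M'.+1 + L) by apply: (le_INR 1); apply/leP.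
have hn0 : 1 <= INR n'.+1 by apply: (le_INR 1); apply/leP.
have hM0 : 1 <= INR M'.+1 by apply: (le_INR 1); apply/leP.
have hnN' : INR n'.+1 <= INR (M'.+1 + L) by apply: le_INR; apply/leP.
have hMN' : INR M'.+1 <= INR (M'.+1 + L) by apply: le_INR; apply/leP; rewrite leq_addr.
have hm0 : 0 < m.
  rewrite /m /Rdiv; apply: Rmult_lt_0_compat; [nra| by apply: Rinv_0_lt_compat].
have hmN : m <= INR (M'.+1 + L).
  rewrite /m; apply: (Rmult_le_reg_r (INR (M'.+1 + L))) => //.
  have -> : INR n'.+1 * INR M'.+1 / INR (M'.+1 + L) * INR (M'.+1 + L)
     = INR n'.+1 * INR M'.+1 by field; lra.
  nra.
pose proof (sqrt_lt_R0 m hm0) as hs.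
pose proof (sqrt_sqrt m (Rlt_le _ _ hm0)) as hss.
have hlnN : 0 <= ln (INR (M'.+1 + L)) by rewrite -ln_1; apply: ln_le'; lra.
rewrite /hyp_E.
eapply Rle_trans.
  apply: (assemble (hyp_pmf (M'.+1 + L) M'.+1 n'.+1) _ n'.+1 m
            (/ (m * sqrt m) + 4 * ln (INR (M'.+1 + L)) / m ^ 2) (sqrt m / m)).
  - move=> k; rewrite /hyp_pmf /Rdiv; apply: Rmult_le_pos; first exact: pos_INR.
    left; apply: Rinv_0_lt_compat; rewrite binomE; exact: binpos.
  - by apply: sum1; apply/leP; lia.
  - by rewrite /m -hmu.
  - exact: F2.
  - have h1 : 0 <= / (m * sqrt m) by left; apply: Rinv_0_lt_compat; nra.
    have h2 : 0 <= 4 * ln (INR (M'.+1 + L)) / m ^ 2.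
      apply: Rmult_le_pos; [lra| left; apply: Rinv_0_lt_compat; apply: pow_lt; lra].
    lra.
  - move=> k; exact: pw.
have -> : INR (M'.+1 + L) / (INR n'.+1 * INR M'.+1) = / m by rewrite /m; field; lra.
rewrite sqrt_inv.
have -> : 4 * INR (M'.+1 + L) * ln (INR (M'.+1 + L)) / (INR n'.+1 * INR M'.+1)
   = 4 * ln (INR (M'.+1 + L)) / m by rewrite /m; field; lra.
right.
have hsm : sqrt m / m = / sqrt m by rewrite -{2}hss; field; lra.
rewrite hsm.
move: hs hss; move: (sqrt m) => s hs hss.
rewrite -hss; field; lra.
Qed.
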